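(* Let $\mathbb{F}$ be an algebraically closed field of characteristic $p>2$ and $(V,[\cdot,\cdot]_V,\alpha_V,B_V)$ a restricted involutive quadratic Hom-Lie algebra with $p$-structure $[p]_V$. Let $L=\mathbb{F}e^*\oplus V\oplus\mathbb{F}e$ be the double extension of $V$ by $(\mathscr{D},x_0,1,\lambda_0)$ and $\widetilde L=\mathbb{F}\widetilde e^*\oplus V\oplus\mathbb{F}\widetilde e$ the double extension by $(\widetilde{\mathscr{D}},\widetilde x_0,1,\widetilde\lambda_0)$, where $\mathscr{D},\widetilde{\mathscr{D}}\in\mathrm{Der}_{\alpha_V}(V)$ are restricted derivations with the $p$-property (data $\xi,a_0$ resp. $\widetilde\xi,\widetilde a_0$) and $B_V$ is $\mathscr{D}$- and $\widetilde{\mathscr{D}}$-invariant. Let $L$ carry the $p$-structure $u^{[p]_L}=u^{[p]_V}+\mathscr{P}(u)e$ ($u\in V$), $(e^* )^{[p]_L}=a_0+le+\xi e^*$, $e^{[p]_L}=me+u_0$, and $\widetilde L$ the $p$-structure $u^{[p]_{\widetilde L}}=u^{[p]_V}+\widetilde{\mathscr{P}}(u)\widetilde e$, $(\widetilde e^* )^{[p]_{\widetilde L}}=\widetilde a_0+\widetilde l\widetilde e+\widetilde\xi\widetilde e^*$, $\widetilde e^{[p]_{\widetilde L}}=\widetilde m\widetilde e+\widetilde u_0$, where $l,m,\widetilde l,\widetilde m\in\mathbb{F}$, $u_0,\widetilde u_0\in\mathfrak z(V)$ with $\mathscr{D}(u_0)=\widetilde{\mathscr{D}}(\widetilde u_0)=0$,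 and $\mathscr{P},\widetilde{\mathscr{P}}:V\to\mathbb{F}$ satisfy $\mathscr{P}(cu)=c^p\mathscr{P}(u)$, $\mathscr{P}(u+v)=\mathscr{P}(u)+\mathscr{P}(v)+\sum_{i=1}^{p-1}\eta_i^V(u,v)$ (and likewise $\widetilde{\mathscr{P}}$ with $\widetilde\eta_i^V$ defined using $\widetilde{\mathscr{D}}$). Let $\pi:L\to\widetilde L$ be an adapted isomorphism of the form $\pi(u)=\pi_0(u)+B_V(t_\pi,u)\widetilde e$ ($u\in V$), $\pi(e)=\gamma\widetilde e$, $\pi(e^* )=\gamma^{-1}(\widetilde e^*-\pi_0(t_\pi)-\frac12B_V(t_\pi,t_\pi)\widetilde e)$, where $\pi_0$ is an automorphism of $V$, $\gamma\in\mathbb{F}\setminus\{0\}$ and $t_\pi\in V$. Then $\pi$ is restricted (i.e. $\pi(f^{[p]_L})=\pi(f)^{[p]_{\widetilde L}}$ for all $f\in L$) if and only if $\pi_0(u^{[p]_V})=(\pi_0(u))^{[p]_V}+B_V(t_\pi,u)^p\widetilde u_0$ for all $u\in V$ and $\widetilde{\mathscr{P}}\circ\pi_0=\gamma\mathscr{P}+B_V(t_\pi,(\cdot)^{[p]_V})-B_V(t_\pi,\cdot)^p\widetilde m$, $\widetilde\xi=\gamma^{p-1}\xi$, $\widetilde l=\gamma^p\big(B_V(t_\pi,a_0)+\gamma l-\frac{\xi}{2\gamma}B_V(t_\pi,t_\pi)\big)+\widetilde{\mathscr{P}}(\pi_0(t_\pi))+\frac{1}{2^p}B_V(t_\pi,t_\pi)^p\widetilde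 m-\sum_{i=1}^{p-1}\frac1i\Phi_{i,\mathrm{II}}$, $\widetilde a_0=\gamma^p(\pi_0(a_0)-\gamma^{-1}\xi\pi_0(t_\pi))+\frac{1}{2^p}B_V(t_\pi,t_\pi)^p\widetilde u_0+\pi_0(t_\pi)^{[p]_V}-\sum_{i=1}^{p-1}\frac1i\Phi_{i,\mathrm{I}}$, $\widetilde m=\gamma^{-p}(\gamma m+B_V(t_\pi,u_0))$, $\widetilde u_0=\gamma^{-p}\pi_0(u_0)$.
   Context: Hom-Lie algebra: $(\mathfrak g,[\cdot,\cdot],\alpha)$ with $[x,y]=-[y,x]$, $[\alpha(x),[y,z]]+[\alpha(y),[z,x]]+[\alpha(z),[x,y]]=0$, $\alpha([x,y])=[\alpha x,\alpha y]$; involutive: $\alpha^2=\mathrm{id}$; quadratic: symmetric nondegenerate bilinear $B$, $B([x,y],z)=B(x,[y,z])$, $B(\alpha x,y)=B(x,\alpha y)$. $p$-structure: map $x\mapsto x^{[p]}$ with $\mathrm{ad}(x^{[p]})\alpha^{p-1}=\mathrm{ad}(\alpha^{p-1}x)\cdots\mathrm{ad}(x)$, $(kx)^{[p]}=k^px^{[p]}$, $(x+y)^{[p]}=x^{[p]}+y^{[p]}+\sum_{i=1}^{p-1}s_i(x,y)$ with $\mathrm{ad}(\alpha^{p-2}(kx+y))\cdots\mathrm{ad}(kx+y)(x)=\sum_i is_i(x,y)k^{i-1}$. $\mathrm{Der}_{\alpha_V}(V)$: linear $\mathscr{D}$ with $\mathscr{D}\alpha_V=\alpha_V\mathscr{D}$,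 $\mathscr{D}[x,y]_V=[\mathscr{D}x,\alpha_Vy]_V+[\alpha_Vx,\mathscr{D}y]_V$; restricted: $\mathscr{D}(x^{[p]_V})=\mathrm{ad}_V(\alpha_V^{p-1}x)\cdots\mathrm{ad}_V(\alpha_Vx)(\mathscr{D}x)$; $p$-property with data $\xi,a_0$: $\mathscr{D}^p=\xi\mathscr{D}\alpha_V^{p-1}+\mathrm{ad}_V(a_0)\alpha_V^{p-1}$, $\mathscr{D}(a_0)=0$. $B_V$ $\mathscr{D}$-invariant: $B_V(\mathscr{D}x,y)+B_V(x,\mathscr{D}y)=0$. $\eta_i^V(u,v)$: defined by $B_V(\mathscr{D}(\alpha_V^{p-2}(ku+v)),\mathrm{ad}_V(\alpha_V^{p-3}(ku+v))\cdots\mathrm{ad}_V(ku+v)(u))=\sum_{i=1}^{p-1}i\eta_i^V(u,v)k^{i-1}$ for all $k$. Double extension by $(\mathscr{D},x_0,1,\lambda_0)$, where $x_0\in V$ satisfies $\mathscr{D}+\mathrm{ad}_V(x_0)=\mathscr{D}$, $\alpha_V(\mathscr{D}x_0)=-\mathscr{D}x_0$, $\alpha_V\mathscr{D}^2-\mathscr{D}^2\alpha_V=\mathrm{ad}_V(\mathscr{D}x_0)$: $L=\mathbb{F}e^*\oplus V\oplus\mathbb{F}e$ with skew bracket $[x,y]=[x,y]_V+B_V(\mathscr{D}x,y)e$, $[e^*,x]=-[x,e^*]=\mathscr{D}x$, $[e^*,e^*]=0$, $e$ central; $\alpha(x)=\alpha_V(x)+B_V(x_0,x)e$, $\alpha(e^*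 )=e^*+x_0+\lambda_0e$, $\alpha(e)=e$; $B|_V=B_V$, $B(V,e)=B(V,e^* )=0$, $B(e^*,e)=1$, $B(e^*,e^* )=B(e,e)=0$ (likewise $\widetilde L$ with twist $\widetilde\alpha$). Adapted isomorphism: linear bijection $\pi:L\to\widetilde L$ preserving brackets and forms, $\pi\alpha=\widetilde\alpha\pi$, $\pi(\mathbb{F}e\oplus V)=\mathbb{F}\widetilde e\oplus V$. Automorphism $\pi_0$ of $V$: linear bijection preserving $[\cdot,\cdot]_V$, $B_V$ and commuting with $\alpha_V$. $\Phi_{i,\mathrm I}\in V$, $\Phi_{i,\mathrm{II}}\in\mathbb{F}$: define $\Phi_i\in\widetilde L$ ($1\le i\le p-1$) by $\mathrm{ad}(\widetilde\alpha^{p-2}(k\widetilde e^*-\pi_0(t_\pi)))\circ\cdots\circ\mathrm{ad}(k\widetilde e^*-\pi_0(t_\pi))(\widetilde e^* )=\sum_{i=1}^{p-1}\Phi_ik^{i-1}$ for all $k\in\mathbb{F}$ (brackets in $\widetilde L$), and let $\Phi_{i,\mathrm I}$ and $\Phi_{i,\mathrm{II}}$ be the $V$-component and the $\widetilde e$-coefficient of $\Phi_i$ in $\widetilde L=\mathbb{F}\widetilde e^*\oplus V\oplus\mathbb{F}\widetilde e$. *)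

(* Defs.v *)
From mathcomp Require Import all_boot all_order all_algebra.
Set Implicit Arguments. Unset Strict Implicit. Unset Printing Implicit Defensive.
Import GRing.Theory.
Local Open Scope ring_scope.

Section HomLieDefs.
Variables (F : fieldType) (W : lmodType F).
Implicit Types (br : W -> W -> W) (al D : W -> W) (B : W -> W -> F).

Definition ad br (x : W) : W -> W := br x.

Fixpoint adprod br al (n : nat) (x : W) : W -> W :=
  match n with
  | 0 => id
  | n'.+1 => fun y => ad br (iter n' al x) (adprod br al n' x y)
  end.

Definition lin (f : W -> W) := forall (a : F) (x y : W), f (a *: x + y) = a *: f x + f y.

Definition HomLie br al :=
  [/\ forall a x y z, br (a *: x + y) z = a *: br x z + br y z,
      forall x y, br x y = - br y x,
      forall x y z, br (al x) (br y z) + br (al y) (br z x) + br (al z) (br x y) = 0,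
      lin al &
      forall x y, al (br x y) = br (al x) (al y)].

Definition Involutive al := forall x, al (al x) = x.

Definition Quadratic br al B :=
  [/\ forall a x y z, B (a *: x + y) z = a * B x z + B y z,
      forall x y, B x y = B y x,
      forall x, (forall y, B x y = 0) -> x = 0,
      forall x y z, B (br x y) z = B x (br y z) &
      forall x y, B (al x) y = B x (al y)].

Definition PStructure (p : nat) br al (pm : W -> W) :=
  [/\ forall x y, br (pm x) (iter p.-1 al y) = adprod br al p x y,
      forall (k : F) x, pm (k *: x) = k ^+ p *: pm x &
      forall x y, exists s : nat -> W,
        (forall k : F, adprod br al p.-1 (k *: x + y) x
                       = \sum_(1 <= i < p) (i%:R * k ^+ i.-1) *: s i) /\
        pm (x + y) = pm x + pm y + \sum_(1 <= i < p) s i].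

Definition DerAlpha br al D :=
  [/\ lin D, forall x, D (al x) = al (D x) &
      forall x y, D (br x y) = br (D x) (al y) + br (al x) (D y)].

Definition RestrictedDer (p : nat) br al (pm : W -> W) D :=
  forall x, D (pm x) = adprod br al p.-1 (al x) (D x).

Definition PProperty (p : nat) br al D (xi : F) (a0 : W) :=
  (forall x, iter p D x = xi *: D (iter p.-1 al x) + br a0 (iter p.-1 al x)) /\ D a0 = 0.

Definition DInvariant B D := forall x y, B (D x) y + B x (D y) = 0.

Definition central br (u : W) := forall x, br u x = 0.

(* "the eta_i^V(u,v) defined by ... " packaged with the additivity law of P:
   P(u+v) = P(u) + P(v) + sum_i eta_i(u,v) *)
Definition PAdd (p : nat) br al B D (P : W -> F) :=
  forall u v, exists eta : nat -> F,
    (forall k : F, B (D (iter p.-2 al (k *: u + v))) (adprod br al p.-2 (k *: u + v) u)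
                   = \sum_(1 <= i < p) i%:R * eta i * k ^+ i.-1) /\
    P (u + v) = P u + P v + \sum_(1 <= i < p) eta i.

Definition Automorphism br al B (f : W -> W) :=
  [/\ lin f, bijective f, forall x y, f (br x y) = br (f x) (f y),
      forall x y, B (f x) (f y) = B x y & forall x, f (al x) = al (f x)].

End HomLieDefs.

(* Double extension L = F e* (+) V (+) F e, an element a e* + x + b e is ((a, x), b) *)
Section DoubleExt.
Variables (F : fieldType) (V : lmodType F).

Definition DE : lmodType F := (F^o * V * F^o)%type.
Definition mkDE (a : F) (x : V) (b : F) : DE := ((a : F^o, x), b : F^o).
Definition es (f : DE) : F := f.1.1.
Definition vp (f : DE) : V := f.1.2.
Definition ec (f : DE) : F := f.2.

Variables (brV : V -> V -> V) (alV : V -> V) (BV : V -> V -> F) (D : V -> V)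
          (x0 : V) (lam0 : F).

(* [x,y] = [x,y]_V + B_V(Dx,y) e, [e*,x] = -[x,e*] = Dx, [e*,e*] = 0, e central *)
Definition DE_br (f g : DE) : DE :=
  mkDE 0 (brV (vp f) (vp g) + es f *: D (vp g) - es g *: D (vp f))
         (BV (D (vp f)) (vp g)).

(* alpha(x) = alpha_V x + B_V(x0,x) e ; alpha of e-star = e-star + x0 + lam0 e ; alpha(e) = e *)
Definition DE_alpha (f : DE) : DE :=
  mkDE (es f) (alV (vp f) + es f *: x0) (lam0 * es f + BV x0 (vp f) + ec f).

Definition DE_form (f g : DE) : F :=
  BV (vp f) (vp g) + es f * ec g + ec f * es g.

Definition DE_data_ok :=
  [/\ forall x, D x + brV x0 x = D x,
      alV (D x0) = - D x0 &
      forall x, alV (D (D x)) - D (D (alV x)) = brV (D x0) x].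

End DoubleExt.

Definition AdaptedIso (F : fieldType) (V : lmodType F)
  (br1 br2 : DE V -> DE V -> DE V) (al1 al2 : DE V -> DE V)
  (B1 B2 : DE V -> DE V -> F) (pi : DE V -> DE V) :=
  [/\ lin pi /\ bijective pi,
      forall f g, pi (br1 f g) = br2 (pi f) (pi g),
      forall f g, B2 (pi f) (pi g) = B1 f g,
      forall f, pi (al1 f) = al2 (pi f) &
      (forall g, es g = 0 <-> exists f, es f = 0 /\ pi f = g)].

(* Main.v *)
Require Import Defs.
From mathcomp Require Import all_boot all_order all_algebra.
From mathcomp Require Import ring.
Set Implicit Arguments. Unset Strict Implicit. Unset Printing Implicit Defensive.
Import GRing.Theory.
Local Open Scope ring_scope.

Lemma poly_vanish (F : fieldType) (W : lmodType F) (n : nat) (c : F)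
  (hc : c != 0) (hcn : forall m, (0 < m <= n)%N -> c ^+ m != 1) (d : nat -> W) :
  (forall k : F, \sum_(j < n.+1) k ^+ j *: d j = 0) -> forall j, (j <= n)%N -> d j = 0.
Proof.
elim: n hcn d => [|n IH] hcn d H j hj.
  move: (H 1); rewrite big_ord1 expr0 scale1r; move: hj; rewrite leqn0 => /eqP -> //.
have hcn' : forall m, (0 < m <= n)%N -> c ^+ m != 1.
  move=> m /andP [h1 h2]; apply: hcn; rewrite h1 /=; exact: leqW.
have hd : forall j, (j <= n)%N -> d j = 0.
  move=> i hi.
  suff H2 : forall k, \sum_(j < n.+1) k ^+ j *: ((c ^+ j - c ^+ n.+1) *: d j) = 0.
    have := IH hcn' (fun j => (c ^+ j - c ^+ n.+1) *: d j) H2 i hi.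
    move/eqP; rewrite scaler_eq0 => /orP [|/eqP //].
    rewrite subr_eq0 => /eqP hE; exfalso.
    have hin : (0 < n.+1 - i <= n.+1)%N by rewrite subn_gt0 ltnS hi leq_subr.
    move: (hcn _ hin); rewrite -(subnK (leqW hi)) in hE.
    move: hE; rewrite exprD -{1}(mul1r (c ^+ i)) => /mulIf hE; rewrite -hE ?eqxx //.
    by rewrite expf_neq0.
  move=> k.
  have E := H (c * k); have E2 := H k.
  rewrite big_ord_recr /= in E; rewrite big_ord_recr /= in E2.
  have : (\sum_(i < n.+1) (c * k) ^+ i *: d i) - c ^+ n.+1 *: (\sum_(i < n.+1) k ^+ i *: d i) = 0.
    move/eqP: E; rewrite addr_eq0 => /eqP ->.
    move/eqP: E2; rewrite addr_eq0 => /eqP ->.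
    by rewrite scalerN scalerA exprMn mulrC opprK addNr.
  move=> E3; rewrite -[X in _ = X]E3 scaler_sumr -sumrB; apply: eq_bigr => m _.
  by rewrite exprMn !scalerA -scalerBl mulrBr (mulrC (k ^+ m)) (mulrC (k ^+ m)).
move: hj; rewrite leq_eqVlt => /orP [/eqP ->|]; last by rewrite ltnS; exact: hd.
move: (H 1); rewrite big_ord_recr /= expr1n scale1r big1 ?add0r //.
move=> i _; rewrite hd ?scaler0 //; exact: ltn_ord i.
Qed.

Lemma exists_c (F : closedFieldType) (n : nat) :
  exists c : F, c != 0 /\ forall m, (0 < m <= n)%N -> c ^+ m != 1.
Proof.
pose q : {poly F} := 'X * \prod_(m < n) ('X ^+ m.+1 - 1).
have q0 : q != 0.
  rewrite mulf_neq0 ?polyX_eq0 //; apply/prodf_neq0 => i _.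
  by rewrite -polyC1 monic_neq0 // monicXnsubC.
have [c hc] := closed_nonrootP q q0.
move: hc; rewrite /root /q hornerM hornerX horner_prod mulf_eq0 negb_or => /andP [c0 hP].
exists c; split => // m /andP [h1 h2].
case: m h1 h2 => // m _ h2.
move/prodf_neq0: hP => /(_ (Ordinal h2) isT) /=.
by rewrite !hornerE subr_eq0.
Qed.

Lemma vanish1 (F : closedFieldType) (W : lmodType F) (p : nat) (v : nat -> W) :
  (forall k : F, \sum_(1 <= i < p) k ^+ i.-1 *: v i = 0) ->
  forall i, (0 < i < p)%N -> v i = 0.
Proof.
case: p => [|[|n]] H i /andP [h1 h2]; first by [].
  by case: i h1 h2 => [|[]].
have [c [c0 hc]] := exists_c F n.
have := @poly_vanish F W n c c0 hc (fun j => v j.+1).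
case: i h1 h2 => // i _ h2; apply => //.
move=> k; rewrite -[RHS](H k) big_add1 /= big_mkord //.
Qed.


Section Gen.
Variables (F : closedFieldType) (W : lmodType F).
Local Notation W1 := W. Local Notation W2 := W.

Lemma lin0 (f : W1 -> W2) : lin f -> f 0 = 0.
Proof. move=> h; have := h 1 0 0; rewrite !scale1r addr0 => /eqP; by rewrite -subr_eq0 opprD addrA subrr add0r oppr_eq0 => /eqP. Qed.
Lemma linD (f : W1 -> W2) : lin f -> forall x y, f (x + y) = f x + f y.
Proof. by move=> h x y; have := h 1 x y; rewrite !scale1r. Qed.
Lemma linZ (f : W1 -> W2) : lin f -> forall a x, f (a *: x) = a *: f x.
Proof. by move=> h a x; rewrite -[a *: x]addr0 h (lin0 h) addr0. Qed.
Lemma linN (f : W1 -> W2) : lin f -> forall x, f (- x) = - f x.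
Proof. by move=> h x; rewrite -scaleN1r (linZ h) scaleN1r. Qed.
Lemma lin_sum (f : W1 -> W2) : lin f -> forall (I : Type) (r : seq I) (P : pred I) (G : I -> W1),
  f (\sum_(i <- r | P i) G i) = \sum_(i <- r | P i) f (G i).
Proof. move=> h I r P G; apply: (big_morph f (linD h) (lin0 h)). Qed.

Lemma adprod_transport (br1 : W1 -> W1 -> W1) (al1 : W1 -> W1)
  (br2 : W2 -> W2 -> W2) (al2 : W2 -> W2) (f : W1 -> W2) :
  (forall x y, f (br1 x y) = br2 (f x) (f y)) -> (forall x, f (al1 x) = al2 (f x)) ->
  forall n x y, f (adprod br1 al1 n x y) = adprod br2 al2 n (f x) (f y).
Proof.
move=> hb ha; elim=> [|n IH] x y //=.
rewrite /ad hb IH; congr br2; elim: n {IH} => //= n IHn; by rewrite ha IHn.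
Qed.
End Gen.

Section PS.
Variables (F : closedFieldType) (p : nat) (hp : p \in [pchar F]).

Lemma natr_neq0 i : (0 < i < p)%N -> (i%:R : F) != 0.
Proof.
move=> /andP [h1 h2]; rewrite -(dvdn_pcharf hp); apply/negP => /(dvdn_leq h1).
by rewrite leqNgt h2.
Qed.

Variables (W : lmodType F).
Local Notation W1 := W. Local Notation W2 := W.

Lemma delta_add (br1 : W1 -> W1 -> W1) (al1 : W1 -> W1) (pm1 : W1 -> W1)
  (br2 : W2 -> W2 -> W2) (al2 : W2 -> W2) (pm2 : W2 -> W2) (f : W1 -> W2) :
  PStructure p br1 al1 pm1 -> PStructure p br2 al2 pm2 -> lin f ->
  (forall x y, f (br1 x y) = br2 (f x) (f y)) -> (forall x, f (al1 x) = al2 (f x)) ->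
  forall x y, f (pm1 (x + y)) - pm2 (f (x + y)) =
     (f (pm1 x) - pm2 (f x)) + (f (pm1 y) - pm2 (f y)).
Proof.
move=> [_ _ h1] [_ _ h2] hf hb ha x y.
have [s [hs ->]] := h1 x y.
rewrite (linD hf x y).
have [s' [hs' ->]] := h2 (f x) (f y).
have E : forall i, (0 < i < p)%N -> f (s i) = s' i.
  suff Z : forall i, (0 < i < p)%N -> (i%:R : F) *: (f (s i) - s' i) = 0.
    move=> i hi; move/eqP: (Z i hi).
    by rewrite scaler_eq0 (negbTE (natr_neq0 hi)) /= subr_eq0 => /eqP.
  apply: (vanish1 (v := fun i => (i%:R : F) *: (f (s i) - s' i))) => k.
  have := hs k; move/(congr1 f); rewrite (adprod_transport hb ha) (linD hf) (linZ hf) hs' (lin_sum hf).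
  move=> E.
  transitivity (\sum_(1 <= i < p) f ((i%:R * k ^+ i.-1) *: s i) - \sum_(1 <= i < p) (i%:R * k ^+ i.-1) *: s' i); last by rewrite E subrr.
  rewrite -sumrB; apply: eq_bigr => i _.
  by rewrite (linZ hf) -scalerBr !scalerA mulrC.
rewrite !(linD hf) (lin_sum hf) (eq_big_nat _ _ (F2 := s')); last first.
  by move=> i hi; apply: E.
by rewrite opprD addrACA subrr addr0 opprD addrACA.
Qed.

Lemma adprod_central (br : W1 -> W1 -> W1) (al : W1 -> W1) (z : W1) :
  (forall f, br f 0 = 0) -> (forall f, br f z = 0) ->
  forall n x, adprod br al n.+1 x z = 0.
Proof.
move=> h0 hz; elim=> [|n IH] x /=; first by rewrite /ad hz.
by move: (IH x); rewrite /= /ad => ->; rewrite h0.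
Qed.

Lemma pm_central (br : W1 -> W1 -> W1) (al : W1 -> W1) (pm : W1 -> W1) (z : W1) :
  (1 < p)%N -> PStructure p br al pm -> (forall f, br f 0 = 0) -> (forall f, br f z = 0) ->
  forall x, pm (z + x) = pm z + pm x.
Proof.
move=> p1 [_ _ h] h0 hz x.
have [s [hs ->]] := h z x.
suff Z : forall i, (0 < i < p)%N -> (i%:R : F) *: s i = 0.
  rewrite big_nat_cond big1 ?addr0 // => i /andP [hi _].
  by move/eqP: (Z i hi); rewrite scaler_eq0 (negbTE (natr_neq0 hi)) /= => /eqP.
apply: (vanish1 (v := fun i => (i%:R : F) *: s i)) => k.
transitivity (\sum_(1 <= i < p) (i%:R * k ^+ i.-1) *: s i).
  by apply: eq_bigr => i _; rewrite scalerA mulrC.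
rewrite -hs; case: p p1 {hs h} => [|[|n]] // _.
exact: adprod_central.
Qed.
End PS.


Section DEL.
Variables (F : fieldType) (V : lmodType F).

Lemma mkDE_eq (a a' : F) (x x' : V) (b b' : F) :
  mkDE a x b = mkDE a' x' b' <-> [/\ a = a', x = x' & b = b'].
Proof. by split; [case=> -> -> -> | case=> -> -> ->]. Qed.

Lemma DE_eta (f : DE V) : f = mkDE (es f) (vp f) (ec f).
Proof. by case: f => [[a x] b]. Qed.

Lemma DE_add (a a' : F) (x x' : V) (b b' : F) :
  mkDE a x b + mkDE a' x' b' = mkDE (a + a') (x + x') (b + b').
Proof. by []. Qed.
Lemma DE_scale (c a : F) (x : V) (b : F) : c *: mkDE a x b = mkDE (c * a) (c *: x) (c * b).
Proof. by []. Qed.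
Lemma DE_opp (a : F) (x : V) (b : F) : - mkDE a x b = mkDE (- a) (- x) (- b).
Proof. by []. Qed.
Lemma DE_zero : (0 : DE V) = mkDE 0 0 0.
Proof. by []. Qed.
Lemma es_sum I (r : seq I) (P : pred I) (G : I -> DE V) :
  es (\sum_(i <- r | P i) G i) = \sum_(i <- r | P i) es (G i).
Proof. by elim/big_rec2: _ => // i u w _ <-. Qed.
Lemma vp_sum I (r : seq I) (P : pred I) (G : I -> DE V) :
  vp (\sum_(i <- r | P i) G i) = \sum_(i <- r | P i) vp (G i).
Proof. by elim/big_rec2: _ => // i u w _ <-. Qed.
Lemma ec_sum I (r : seq I) (P : pred I) (G : I -> DE V) :
  ec (\sum_(i <- r | P i) G i) = \sum_(i <- r | P i) ec (G i).
Proof. by elim/big_rec2: _ => // i u w _ <-. Qed.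
Lemma DE_sum I (r : seq I) (P : pred I) (G : I -> DE V) :
  \sum_(i <- r | P i) G i =
  mkDE (\sum_(i <- r | P i) es (G i)) (\sum_(i <- r | P i) vp (G i)) (\sum_(i <- r | P i) ec (G i)).
Proof. by rewrite -es_sum -vp_sum -ec_sum -DE_eta. Qed.

Lemma DE_dec (a : F) (x : V) (b : F) :
  mkDE a x b = a *: mkDE 1 0 0 + mkDE 0 x 0 + b *: mkDE 0 0 1.
Proof. rewrite !DE_scale (DE_add (a * 1)) (DE_add (a * 1 + 0)). by rewrite !mulr1 !mulr0 !scaler0 !addr0 !add0r. Qed.

Variables (brV : V -> V -> V) (alV : V -> V) (BV : V -> V -> F) (D : V -> V) (x0 : V) (lam0 : F).

Lemma iter_alpha_es_vp n (f g : DE V) : es f = es g -> vp f = vp g ->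
  es (iter n (DE_alpha alV BV x0 lam0) f) = es (iter n (DE_alpha alV BV x0 lam0) g) /\
  vp (iter n (DE_alpha alV BV x0 lam0) f) = vp (iter n (DE_alpha alV BV x0 lam0) g).
Proof.
move=> h1 h2; elim: n => [|n [IH1 IH2]] //=.
by rewrite /DE_alpha /es /vp /= -/(es _) -/(vp _) IH1 IH2.
Qed.

Lemma adprod_ec n (f g y : DE V) : es f = es g -> vp f = vp g ->
  adprod (DE_br brV BV D) (DE_alpha alV BV x0 lam0) n f y =
  adprod (DE_br brV BV D) (DE_alpha alV BV x0 lam0) n g y.
Proof.
move=> h1 h2; elim: n => [|n IH] //=.
have [e1 e2] := iter_alpha_es_vp n h1 h2.
by rewrite IH /ad /DE_br e1 e2.
Qed.

End DEL.

Section DEL2.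
Variables (F : fieldType) (V : lmodType F).
Implicit Types (f g : DE V) (a b c : F) (x : V).
Lemma esD f g : es (f + g) = es f + es g. Proof. by []. Qed.
Lemma vpD f g : vp (f + g) = vp f + vp g. Proof. by []. Qed.
Lemma ecD f g : ec (f + g) = ec f + ec g. Proof. by []. Qed.
Lemma esZ c f : es (c *: f) = c * es f. Proof. by []. Qed.
Lemma vpZ c f : vp (c *: f) = c *: vp f. Proof. by []. Qed.
Lemma ecZ c f : ec (c *: f) = c * ec f. Proof. by []. Qed.
Lemma esN f : es (- f) = - es f. Proof. by []. Qed.
Lemma vpN f : vp (- f) = - vp f. Proof. by []. Qed.
Lemma ecN f : ec (- f) = - ec f. Proof. by []. Qed.
Lemma esE a x b : es (mkDE a x b) = a. Proof. by []. Qed.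
Lemma vpE a x b : vp (mkDE a x b) = x. Proof. by []. Qed.
Lemma ecE a x b : ec (mkDE a x b) = b. Proof. by []. Qed.
Lemma es0 : es (0 : DE V) = 0. Proof. by []. Qed.
Lemma vp0 : vp (0 : DE V) = 0. Proof. by []. Qed.
Lemma ec0 : ec (0 : DE V) = 0. Proof. by []. Qed.

Lemma DE_ext f g : f = g <-> [/\ es f = es g, vp f = vp g & ec f = ec g].
Proof. split; [by move=> -> | case: f g => [[a x] b] [[a1 x1] b1] [h1 h2 h3]]. by move: h1 h2 h3; rewrite /es /vp /ec /= => -> -> ->. Qed.

Lemma DE_br_central (brV : V -> V -> V) (BV : V -> V -> F) (D : V -> V) c :
  (forall z, brV z 0 = 0) -> (forall z, BV z 0 = 0) -> D 0 = 0 ->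
  forall f, DE_br brV BV D f (mkDE 0 0 c) = 0.
Proof.
move=> h1 h2 h3 f; rewrite /DE_br vpE esE h1 h3 h2 scaler0 scale0r subr0 addr0.
by [].
Qed.
Lemma DE_br_0 (brV : V -> V -> V) (BV : V -> V -> F) (D : V -> V) :
  (forall z, brV z 0 = 0) -> (forall z, BV z 0 = 0) -> D 0 = 0 ->
  forall f, DE_br brV BV D f 0 = 0.
Proof. by move=> h1 h2 h3 f; rewrite DE_zero DE_br_central. Qed.
End DEL2.


Theorem theorem4p13
  (F : closedFieldType) (p : nat) (hp : p \in [pchar F]) (hp2 : (2 < p)%N)
  (V : lmodType F) (brV : V -> V -> V) (alV : V -> V) (BV : V -> V -> F)
  (pmV : V -> V)
  (hV : HomLie brV alV) (hinv : Involutive alV) (hQ : Quadratic brV alV BV)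
  (hpV : PStructure p brV alV pmV)
  (D Dt : V -> V) (xi xit : F) (a0 a0t : V)
  (hD : DerAlpha brV alV D) (hDr : RestrictedDer p brV alV pmV D)
  (hDp : PProperty p brV alV D xi a0) (hBD : DInvariant BV D)
  (hDt : DerAlpha brV alV Dt) (hDtr : RestrictedDer p brV alV pmV Dt)
  (hDtp : PProperty p brV alV Dt xit a0t) (hBDt : DInvariant BV Dt)
  (x0 x0t : V) (lam0 lam0t : F)
  (hx0 : DE_data_ok brV alV D x0) (hx0t : DE_data_ok brV alV Dt x0t)
  (P Pt : V -> F) (l m lt mt : F) (u0 u0t : V)
  (hu0 : central brV u0) (hDu0 : D u0 = 0)
  (hu0t : central brV u0t) (hDtu0t : Dt u0t = 0)
  (hP1 : forall (c : F) (u : V), P (c *: u) = c ^+ p * P u)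
  (hP2 : PAdd p brV alV BV D P)
  (hPt1 : forall (c : F) (u : V), Pt (c *: u) = c ^+ p * Pt u)
  (hPt2 : PAdd p brV alV BV Dt Pt)
  (pL pLt : DE V -> DE V)
  (hpL : PStructure p (DE_br brV BV D) (DE_alpha alV BV x0 lam0) pL)
  (hpLV : forall u : V, pL (mkDE 0 u 0) = mkDE 0 (pmV u) (P u))
  (hpLes : pL (mkDE 1 0 0) = mkDE xi a0 l)
  (hpLe : pL (mkDE 0 0 1) = mkDE 0 u0 m)
  (hpLt : PStructure p (DE_br brV BV Dt) (DE_alpha alV BV x0t lam0t) pLt)
  (hpLtV : forall u : V, pLt (mkDE 0 u 0) = mkDE 0 (pmV u) (Pt u))
  (hpLtes : pLt (mkDE 1 0 0) = mkDE xit a0t lt)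
  (hpLte : pLt (mkDE 0 0 1) = mkDE 0 u0t mt)
  (pi0 : V -> V) (gam : F) (t : V)
  (hpi0 : Automorphism brV alV BV pi0) (hgam : gam != 0)
  (pi : DE V -> DE V)
  (hpi : AdaptedIso (DE_br brV BV D) (DE_br brV BV Dt)
                    (DE_alpha alV BV x0 lam0) (DE_alpha alV BV x0t lam0t)
                    (DE_form BV) (DE_form BV) pi)
  (hpiV : forall u : V, pi (mkDE 0 u 0) = mkDE 0 (pi0 u) (BV t u))
  (hpie : pi (mkDE 0 0 1) = mkDE 0 0 gam)
  (hpies : pi (mkDE 1 0 0) = gam^-1 *: mkDE 1 (- pi0 t) (- (2^-1 * BV t t)))
  (Phi : nat -> DE V)
  (hPhi : forall k : F,
     adprod (DE_br brV BV Dt) (DE_alpha alV BV x0t lam0t) p.-1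
            (mkDE k (- pi0 t) 0) (mkDE 1 0 0)
     = \sum_(1 <= i < p) k ^+ i.-1 *: Phi i) :
  (forall f : DE V, pi (pL f) = pLt (pi f)) <->
  [/\ (forall u : V, pi0 (pmV u) = pmV (pi0 u) + BV t u ^+ p *: u0t),
      (forall u : V, Pt (pi0 u) = gam * P u + BV t (pmV u) - BV t u ^+ p * mt),
      xit = gam ^+ p.-1 * xi,
      lt = gam ^+ p * (BV t a0 + gam * l - xi / (2 * gam) * BV t t)
           + Pt (pi0 t) + (2 ^+ p)^-1 * BV t t ^+ p * mt
           - \sum_(1 <= i < p) (i%:R)^-1 * ec (Phi i) &
      [/\ a0t = gam ^+ p *: (pi0 a0 - (gam^-1 * xi) *: pi0 t)
                + ((2 ^+ p)^-1 * BV t t ^+ p) *: u0t + pmV (pi0 t)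
                - \sum_(1 <= i < p) (i%:R)^-1 *: vp (Phi i),
          mt = gam ^- p * (gam * m + BV t u0) &
          u0t = gam ^- p *: pi0 u0]].
Proof.
have p1 : (1 < p)%N by apply: ltnW.
have hpr : prime p := pcharf_prime hp.
have podd : odd p by case: (even_prime hpr) => // E; rewrite E in hp2.
case: hV => hbrl hskew _ halin _.
case: hQ => hBl hBsym _ _ _.
case: (hD) => hDlin _ _; case: (hDt) => hDtlin _ _.
have br0l : forall z, brV 0 z = 0.
  move=> z; have := hbrl 1 0 0 z; rewrite scale1r addr0 scale1r => /eqP.
  by rewrite -subr_eq0 opprD addrA subrr add0r oppr_eq0 => /eqP.
have br0r : forall z, brV z 0 = 0 by move=> z; rewrite hskew br0l oppr0.
have B0l : forall z, BV 0 z = 0.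
  move=> z; have := hBl 1 0 0 z; rewrite scale1r addr0 mul1r => /eqP.
  by rewrite -subr_eq0 opprD addrA subrr add0r oppr_eq0 => /eqP.
have B0r : forall z, BV z 0 = 0 by move=> z; rewrite hBsym B0l.
have D0 : D 0 = 0 := lin0 hDlin.
have Dt0 : Dt 0 = 0 := lin0 hDtlin.
case: hpi => [[hpil _] hpib _ hpia _].
have dadd := delta_add hp hpL hpLt hpil hpib hpia.
have dZ : forall a f, pi (pL (a *: f)) - pLt (pi (a *: f)) = a ^+ p *: (pi (pL f) - pLt (pi f)).
  move=> a f; case: hpL => _ -> _; case: hpLt => _ hZ _.
  by rewrite (linZ hpil) (linZ hpil) hZ scalerBr.
have pmc : forall c x, pL (mkDE 0 0 c + x) = c ^+ p *: mkDE 0 u0 m + pL x.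
  move=> c x; rewrite (pm_central hp p1 hpL (DE_br_0 br0r B0r D0) (DE_br_central c br0r B0r D0)).
  case: hpL => _ hZ _; have -> : mkDE 0 (0 : V) c = c *: mkDE 0 (0 : V) 1 by rewrite DE_scale mulr0 mulr1 scaler0.
  by rewrite hZ hpLe.
have pmct : forall c x, pLt (mkDE 0 0 c + x) = c ^+ p *: mkDE 0 u0t mt + pLt x.
  move=> c x; rewrite (pm_central hp p1 hpLt (DE_br_0 br0r B0r Dt0) (DE_br_central c br0r B0r Dt0)).
  case: hpLt => _ hZ _; have -> : mkDE 0 (0 : V) c = c *: mkDE 0 (0 : V) 1 by rewrite DE_scale mulr0 mulr1 scaler0.
  by rewrite hZ hpLte.
have hZ : forall a f, pL (a *: f) = a ^+ p *: pL f by case: hpL.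
have hZt : forall a f, pLt (a *: f) = a ^+ p *: pLt f by case: hpLt.
have stepA : (forall f, pi (pL f) = pLt (pi f)) <->
  [/\ forall u, pi (pL (mkDE 0 u 0)) = pLt (pi (mkDE 0 u 0)),
      pi (pL (mkDE 0 (0 : V) 1)) = pLt (pi (mkDE 0 (0 : V) 1)) &
      pi (pL (mkDE 1 (0 : V) 0)) = pLt (pi (mkDE 1 (0 : V) 0))].
  split; first by move=> H; split.
  case=> H1 H2 H3 f; apply/eqP; rewrite -subr_eq0; apply/eqP.
  rewrite [f]DE_eta DE_dec !dadd !dZ.
  by rewrite H1 H2 H3 !subrr !scaler0 !addr0.
have B1 : forall u, pi (pL (mkDE 0 u 0)) = pLt (pi (mkDE 0 u 0)) <->
   (pi0 (pmV u) = pmV (pi0 u) + BV t u ^+ p *: u0t /\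
    Pt (pi0 u) = gam * P u + BV t (pmV u) - BV t u ^+ p * mt).
  move=> u.
  have -> : pi (pL (mkDE 0 u 0)) = mkDE 0 (pi0 (pmV u)) (BV t (pmV u) + P u * gam).
    rewrite hpLV (DE_dec 0 (pmV u) (P u)) !(linD hpil) !(linZ hpil) hpiV hpie hpies.
    apply/DE_ext; rewrite !(esD, esZ, vpD, vpZ, ecD, ecZ, esE, vpE, ecE).
    split; rewrite ?mul0r ?scale0r ?add0r ?addr0 ?mulr0 ?scaler0 //; exact: addr0.
  have -> : pLt (pi (mkDE 0 u 0)) =
      mkDE 0 (BV t u ^+ p *: u0t + pmV (pi0 u)) (BV t u ^+ p * mt + Pt (pi0 u)).
    rewrite hpiV.
    have -> : mkDE 0 (pi0 u) (BV t u) = mkDE 0 0 (BV t u) + mkDE 0 (pi0 u) 0.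
      apply/DE_ext; rewrite !(esD, esZ, vpD, vpZ, ecD, ecZ, esE, vpE, ecE).
      by split; rewrite ?add0r ?addr0.
    rewrite pmct hpLtV; apply/DE_ext; rewrite !(esD, esZ, vpD, vpZ, ecD, ecZ, esE, vpE, ecE).
    by split; rewrite ?mulr0 ?add0r.
  split.
    move/mkDE_eq => [_ h1 h2]; split; first by rewrite h1 addrC.
    by rewrite -[Pt _](addKr (BV t u ^+ p * mt)) -h2; ring.
  move=> [h1 h2]; apply/mkDE_eq; split => //; first by rewrite h1 addrC.
  by rewrite h2; ring.
have gp : gam ^+ p != 0 by rewrite expf_neq0.
have B2 : pi (pL (mkDE 0 (0 : V) 1)) = pLt (pi (mkDE 0 (0 : V) 1)) <->
   (mt = gam ^- p * (gam * m + BV t u0) /\ u0t = gam ^- p *: pi0 u0).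
  have -> : pi (pL (mkDE 0 (0 : V) 1)) = mkDE 0 (pi0 u0) (BV t u0 + m * gam).
    rewrite hpLe (DE_dec 0 u0 m) !(linD hpil) !(linZ hpil) hpiV hpie hpies.
    apply/DE_ext; rewrite !(esD, esZ, vpD, vpZ, ecD, ecZ, esE, vpE, ecE).
    split; rewrite ?mul0r ?scale0r ?add0r ?addr0 ?mulr0 ?scaler0 //; exact: addr0.
  have -> : pLt (pi (mkDE 0 (0 : V) 1)) = mkDE 0 (gam ^+ p *: u0t) (gam ^+ p * mt).
    rewrite hpie.
    have -> : mkDE 0 (0 : V) gam = gam *: mkDE 0 0 1 by rewrite DE_scale mulr0 mulr1 scaler0.
    by rewrite hZt hpLte DE_scale mulr0.
  split.
    move/mkDE_eq => [_ h1 h2]; split.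
      by rewrite [gam * m]mulrC [_ + BV t u0]addrC h2 mulrA mulVf // mul1r.
    by rewrite h1 scalerA mulVf // scale1r.
  move=> [h1 h2]; apply/mkDE_eq; split => //.
    by rewrite h2 scalerA mulfV // scale1r.
  by rewrite h1 mulrA mulfV // mul1r addrC mulrC.
have m1p : (-1 : F) ^+ p = -1 by rewrite -signr_odd podd expr1.
have two0 : (2 : F) != 0 by apply: (natr_neq0 hp (i := 2)); rewrite hp2.
set c := - (2^-1 * BV t t).
have cp : c ^+ p = - ((2 ^+ p)^-1 * BV t t ^+ p).
  by rewrite /c -mulN1r !exprMn m1p exprVn mulN1r.
case: (hpLt) => _ _ hadd.
have hp1 : p.-1 = p.-2.+1 by case: (p) p1 => [|[|n]].
have esPhi : forall i, (0 < i < p)%N -> es (Phi i) = 0.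
  apply: (vanish1 (W := F^o) (v := fun i => es (Phi i))) => k.
  transitivity (es (\sum_(1 <= i < p) k ^+ i.-1 *: Phi i)); first by rewrite es_sum.
  by rewrite -hPhi hp1.
have sumPhi : forall y : DE V, es y = 0 -> vp y = - pi0 t ->
    pLt (mkDE 1 0 0 + y) = pLt (mkDE 1 0 0) + pLt y + \sum_(1 <= i < p) (i%:R)^-1 *: Phi i.
  move=> y ey vy; have [s [hs ->]] := hadd (mkDE 1 0 0) y.
  congr (_ + _); apply: eq_big_nat => i hi.
  suff Z : forall i, (0 < i < p)%N -> (i%:R : F) *: s i - Phi i = 0.
    move/eqP: (Z i hi); rewrite subr_eq0 => /eqP E; rewrite -?E.
    by rewrite scalerA mulVf ?(natr_neq0 hp hi) ?scale1r.
  apply: (@vanish1 F (DE V) p (fun i => (i%:R : F) *: s i - Phi i)) => k.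
  transitivity (\sum_(1 <= i < p) (i%:R * k ^+ i.-1) *: s i - \sum_(1 <= i < p) k ^+ i.-1 *: Phi i).
    by rewrite -sumrB; apply: eq_bigr => j _; rewrite scalerBr scalerA mulrC.
  rewrite -hs -hPhi.
  rewrite (@adprod_ec F V brV alV BV Dt x0t lam0t p.-1 (k *: mkDE 1 0 0 + y) (mkDE k (- pi0 t) 0) (mkDE 1 0 0)) ?subrr //.
    by rewrite esD esZ esE ey mulr1 addr0.
  by rewrite vpD vpZ vpE vy scaler0 add0r.
have R : pLt (pi (mkDE 1 0 0)) = gam^-1 ^+ p *: (mkDE xit a0t lt
     + (c ^+ p *: mkDE 0 u0t mt + (-1) ^+ p *: mkDE 0 (pmV (pi0 t)) (Pt (pi0 t)))
     + \sum_(1 <= i < p) (i%:R)^-1 *: Phi i).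
  rewrite hpies hZt; congr (_ *: _).
  have -> : mkDE 1 (- pi0 t) c = mkDE 1 0 0 + mkDE 0 (- pi0 t) c.
    apply/DE_ext; rewrite !(esD, esZ, vpD, vpZ, ecD, ecZ, esE, vpE, ecE).
    by split; rewrite ?add0r ?addr0.
  rewrite sumPhi // hpLtes.
  have -> : mkDE 0 (- pi0 t) c = mkDE 0 0 c + (-1) *: mkDE 0 (pi0 t) 0.
    apply/DE_ext; rewrite !(esD, esZ, vpD, vpZ, ecD, ecZ, esE, vpE, ecE).
    by split; rewrite ?mulr0 ?add0r ?addr0 ?scaleN1r ?mulN1r.
  by rewrite pmct hZt hpLtV.
have L : pi (pL (mkDE 1 0 0)) = mkDE (xi * gam^-1) (xi *: (gam^-1 *: - pi0 t) + pi0 a0)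
      (xi * (gam^-1 * c) + BV t a0 + l * gam).
  rewrite hpLes (DE_dec xi a0 l) !(linD hpil) !(linZ hpil) hpiV hpie hpies.
  apply/DE_ext; rewrite !(esD, esZ, vpD, vpZ, ecD, ecZ, esE, vpE, ecE).
  split; rewrite ?mulr1 ?mulr0 ?addr0 ?scaler0 //; exact: addr0.
have esS : es (\sum_(1 <= i < p) (i%:R)^-1 *: Phi i) = 0.
  rewrite es_sum big_nat_cond big1 // => i /andP [hi _].
  by rewrite esZ esPhi // mulr0.
have vpS : vp (\sum_(1 <= i < p) (i%:R)^-1 *: Phi i) = \sum_(1 <= i < p) (i%:R)^-1 *: vp (Phi i).
  by rewrite vp_sum.
have ecS : ec (\sum_(1 <= i < p) (i%:R)^-1 *: Phi i) = \sum_(1 <= i < p) (i%:R)^-1 * ec (Phi i).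
  by rewrite ec_sum.
have key : forall X Y : DE V, X = (gam ^+ p)^-1 *: Y <-> gam ^+ p *: X = Y.
  move=> X Y; split => [->|<-]; by rewrite scalerA ?mulfV ?mulVf // scale1r.
have solve : forall (Z : zmodType) (X a R S : Z), X = a + R + S <-> a = X - R - S.
  by move=> Z X a R0 S; split => ->; rewrite addrAC ?addrK // !subrK.
have Gs : gam ^+ p = gam ^+ p.-1 * gam by rewrite -exprSr prednK // ltnW.
have B3 : pi (pL (mkDE 1 (0 : V) 0)) = pLt (pi (mkDE 1 (0 : V) 0)) <->
  [/\ xit = gam ^+ p.-1 * xi,
      lt = gam ^+ p * (BV t a0 + gam * l - xi / (2 * gam) * BV t t)
           + Pt (pi0 t) + (2 ^+ p)^-1 * BV t t ^+ p * mt
           - \sum_(1 <= i < p) (i%:R)^-1 * ec (Phi i) &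
      a0t = gam ^+ p *: (pi0 a0 - (gam^-1 * xi) *: pi0 t)
                + ((2 ^+ p)^-1 * BV t t ^+ p) *: u0t + pmV (pi0 t)
                - \sum_(1 <= i < p) (i%:R)^-1 *: vp (Phi i)].
  rewrite L R exprVn.
  apply: (iff_trans (key _ _)); apply: (iff_trans (DE_ext _ _)).
  rewrite !(esD, esZ, vpD, vpZ, ecD, ecZ, esE, vpE, ecE) esS vpS ecS.
  rewrite cp m1p ?mulr0 ?scaler0 ?addr0.
  have e1 : (gam ^+ p * (xi / gam) = xit) <-> (xit = gam ^+ p.-1 * xi).
    have -> : gam ^+ p * (xi / gam) = gam ^+ p.-1 * xi by rewrite Gs; field.
    by split => ->.
  have e2 : forall A R0 S, A - R0 - S =
      gam ^+ p *: (pi0 a0 - (gam^-1 * xi) *: pi0 t) +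
      (2 ^- p * BV t t ^+ p) *: u0t + pmV (pi0 t) - S ->
      (A = a0t + R0 + S <-> a0t = gam ^+ p *: (pi0 a0 - (gam^-1 * xi) *: pi0 t) +
      (2 ^- p * BV t t ^+ p) *: u0t + pmV (pi0 t) - S).
    by move=> A R0 S <-; apply: solve.
  have e3 : forall A R0 S, A - R0 - S =
      gam ^+ p * (BV t a0 + gam * l - xi / (2 * gam) * BV t t) + Pt (pi0 t) +
      2 ^- p * BV t t ^+ p * mt - S ->
      (A = lt + R0 + S <-> lt = gam ^+ p * (BV t a0 + gam * l - xi / (2 * gam) * BV t t) + Pt (pi0 t) +
      2 ^- p * BV t t ^+ p * mt - S).
    by move=> A R0 S <-; apply: solve.
  have E2 : gam ^+ p *: (xi *: (gam^-1 *: - pi0 t) + pi0 a0)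
      - (- (2 ^- p * BV t t ^+ p) *: u0t + -1 *: pmV (pi0 t))
      - \sum_(1 <= i < p) (i%:R)^-1 *: vp (Phi i) =
      gam ^+ p *: (pi0 a0 - (gam^-1 * xi) *: pi0 t) +
      (2 ^- p * BV t t ^+ p) *: u0t + pmV (pi0 t) - \sum_(1 <= i < p) (i%:R)^-1 *: vp (Phi i).
    congr (_ - _); rewrite scaleN1r scaleNr opprD !opprK addrA.
    congr (_ + _ + _); congr (_ *: _).
    by rewrite scalerA scalerN addrC [xi * _]mulrC.
  have E3 : gam ^+ p * (xi * (gam^-1 * c) + BV t a0 + l * gam)
      - (- (2 ^- p * BV t t ^+ p) * mt + -1 * Pt (pi0 t))
      - \sum_(1 <= i < p) (i%:R)^-1 * ec (Phi i) =
      gam ^+ p * (BV t a0 + gam * l - xi / (2 * gam) * BV t t) + Pt (pi0 t) +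
      2 ^- p * BV t t ^+ p * mt - \sum_(1 <= i < p) (i%:R)^-1 * ec (Phi i).
    congr (_ - _); rewrite /c; field.
    by rewrite expf_neq0 // hgam two0.
  split => [[h1 h2 h3] | [h1 h2 h3]]; split.
  - by apply/e1.
  - by apply/(e3 _ _ _ E3).
  - by apply/(e2 _ _ _ E2).
  - by apply/e1.
  - by apply/(e2 _ _ _ E2).
  - by apply/(e3 _ _ _ E3).
apply: (iff_trans stepA); split.
  case=> H1 H2 H3.
  have [m1 m2] := proj1 B2 H2; have [x1 x2 x3] := proj1 B3 H3.
  split => //.
  - by move=> u; case: (proj1 (B1 u) (H1 u)).
  - by move=> u; case: (proj1 (B1 u) (H1 u)).
case=> C1 C2 C3 C4 [C5 C6 C7]; split.
- by move=> u; apply/B1; split; [exact: C1 | exact: C2].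
- by apply/B2; split.
- by apply/B3; split.
Qed.
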